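(* Let $\mathbf{C}$ be a locally small category all of whose morphisms are monomorphisms, and let $\mathfrak{G} = (G_A)_{A \in \mathrm{Ob}(\mathbf{C})}$ be a family of groups with $G_A \le \mathrm{Aut}_\mathbf{C}(A)$ for all $A$. Then for every $A \in \mathrm{Ob}(\mathbf{C})$, $$t_\mathbf{C}(A) = |G_A| \cdot t^\mathfrak{G}_\mathbf{C}(A),$$ where the equality is read in $\mathbb{N}_\infty$ (in particular, if $G_A$ is infinite then $t_\mathbf{C}(A) = \infty$).
   Context: $\mathrm{Aut}_\mathbf{C}(A)$ is the group of invertible morphisms $A \to A$. For $f, g \in \hom(A,B)$ write $f \sim_\mathfrak{G} g$ if $f = g \cdot \alpha$ for some $\alpha \in G_A$; let $\binom{B}{A}_\mathfrak{G} = \hom(A,B)/{\sim_\mathfrak{G}} = \{f \cdot G_A : f \in \hom(A,B)\}$, and for $w \in \hom(B,C)$ let $w \cdot \binom{B}{A}_\mathfrak{G} = \{(w\cdot f)/{\sim_\mathfrak{G}} : f \in \hom(A,B)\}$. For $k,t \in \mathbb{N}$, $C \overset{\mathfrak{G}}{\longrightarrow} (B)^A_{k,t}$ means: for every coloring $\chi : \binom{C}{A}_\mathfrak{G} \to k=\{0,\dots,k-1\}$ there is $w \in \hom(B,C)$ with $|\chi(w \cdot \binom{B}{A}_\mathfrak{G})| \le t$. The small $\mathfrak{G}$-Ramsey degree $t^\mathfrak{G}_\mathbf{C}(A)$ is the least positive integer $n$ such that for all $k \in \mathbb{N}$ and all $B \in \mathrm{Ob}(\mathbf{C})$ there is $C$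 with $C \overset{\mathfrak{G}}{\longrightarrow} (B)^A_{k,n}$, and $\infty$ if there is none. The small embedding Ramsey degree $t_\mathbf{C}(A)$ is $t^\mathfrak{G}_\mathbf{C}(A)$ for the family $G_A = \{\mathrm{id}_A\}$ (so classes are single morphisms). Convention: $\mathbb{N}_\infty = \{1,2,\dots,\infty\}$ with $\infty \cdot n = n \cdot \infty = \infty\cdot\infty = \infty$, and $|G_A|$ is taken to be $\infty$ when $G_A$ is infinite. *)

(* Defs.v *)
From mathcomp Require Import all_boot.
From Stdlib Require Import ClassicalEpsilon.
Set Implicit Arguments. Unset Strict Implicit. Unset Printing Implicit Defensive.

(* A category (hom-types play the role of hom-sets: locally small). *)
Record category := Category {
  Ob : Type;
  hom : Ob -> Ob -> Type;
  comp : forall A B C : Ob, hom B C -> hom A B -> hom A C;  (* comp g f = g . f *)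
  idm : forall A : Ob, hom A A;
  comp_assoc : forall (A B C D : Ob) (h : hom C D) (g : hom B C) (f : hom A B),
      comp h (comp g f) = comp (comp h g) f;
  comp_id_l : forall (A B : Ob) (f : hom A B), comp (idm B) f = f;
  comp_id_r : forall (A B : Ob) (f : hom A B), comp f (idm A) = f
}.
Arguments comp {c A B C}.
Arguments idm {c}.

Definition all_mono (Cat : category) : Prop :=
  forall (A B D : Ob Cat) (h : hom B D) (f g : hom A B), comp h f = comp h g -> f = g.

Definition is_aut (Cat : category) (A : Ob Cat) (f : hom A A) : Prop :=
  exists g : hom A A, comp g f = idm A /\ comp f g = idm A.

Definition subgroup_family (Cat : category) (G : forall A : Ob Cat, hom A A -> Prop) : Prop :=
  forall A : Ob Cat,
    (forall f, G A f -> is_aut f) /\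
    G A (idm A) /\
    (forall f g, G A f -> G A g -> G A (comp f g)) /\
    (forall f, G A f -> exists g, G A g /\ comp g f = idm A /\ comp f g = idm A).

(* colorings chi : binom(C,A)_G -> k, represented as maps on hom(A,C)
   constant on the classes f . G_A *)
Definition G_coloring (Cat : category) (G : forall A : Ob Cat, hom A A -> Prop)
  (A C : Ob Cat) (k : nat) (chi : hom A C -> 'I_k) : Prop :=
  forall (f : hom A C) (a : hom A A), G A a -> chi (comp f a) = chi f.

Definition G_arrow (Cat : category) (G : forall A : Ob Cat, hom A A -> Prop)
  (C B A : Ob Cat) (k t : nat) : Prop :=
  forall chi : hom A C -> 'I_k, G_coloring G chi ->
    exists (w : hom B C) (S : {set 'I_k}),
      #|S| <= t /\ forall f : hom A B, chi (comp w f) \in S.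

(* N_infinity: Some n = n, None = infinity *)
Definition natinf := option nat.
Definition mulinf (x y : natinf) : natinf :=
  match x, y with Some a, Some b => Some (a * b) | _, _ => None end.

Definition is_least_pos (P : nat -> Prop) (d : natinf) : Prop :=
  match d with
  | Some n => 0 < n /\ P n /\ forall m, 0 < m -> P m -> n <= m
  | None => forall n, 0 < n -> ~ P n
  end.

Definition least_pos (P : nat -> Prop) : natinf :=
  epsilon (inhabits None) (is_least_pos P).

Definition G_ramsey_prop (Cat : category) (G : forall A : Ob Cat, hom A A -> Prop)
  (A : Ob Cat) (n : nat) : Prop :=
  forall (k : nat) (B : Ob Cat), exists C : Ob Cat, G_arrow G C B A k n.

Definition G_ramsey_degree (Cat : category) (G : forall A : Ob Cat, hom A A -> Prop)
  (A : Ob Cat) : natinf := least_pos (G_ramsey_prop G A).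

Definition trivial_family (Cat : category) (A : Ob Cat) (f : hom A A) : Prop := f = idm A.
Definition ramsey_degree (Cat : category) (A : Ob Cat) : natinf :=
  G_ramsey_degree (@trivial_family Cat) A.

Definition is_card (T : Type) (P : T -> Prop) (d : natinf) : Prop :=
  match d with
  | Some n => exists (e : 'I_n -> T),
      injective e /\ (forall i, P (e i)) /\ (forall x, P x -> exists i, e i = x)
  | None => forall n (e : 'I_n -> T),
      injective e -> (forall i, P (e i)) -> ~ (forall x, P x -> exists i, e i = x)
  end.

Definition card_inf (T : Type) (P : T -> Prop) : natinf :=
  epsilon (inhabits None) (is_card P).

(* Main.v *)
Require Import Defs.
From mathcomp Require Import all_boot.
From Stdlib Require Import ClassicalEpsilon FunctionalExtensionality PropExtensionality ProofIrrelevance Classical.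

Set Implicit Arguments. Unset Strict Implicit. Unset Printing Implicit Defensive.

Lemma least_pos_spec (P : nat -> Prop) : is_least_pos P (least_pos P).
Proof.
rewrite /least_pos; apply: epsilon_spec.
case: (classic (exists n, 0 < n /\ P n)) => [[n [n0 Pn]]|nex].
- suff: forall N, (exists n, n <= N /\ 0 < n /\ P n) -> exists d, is_least_pos P d.
    by apply; exists n.
  elim=> [|N IH] [m [mN [m0 Pm]]]; first by move: mN m0; rewrite leqn0 => /eqP->.
  case: (classic (exists n, n <= N /\ 0 < n /\ P n)) => [h|h]; first exact: IH.
  exists (Some m); split=> //; split=> // m' m'0 Pm'.
  rewrite leqNgt; apply/negP => lt; apply: h; exists m'; split=> //.
  by rewrite -ltnS (leq_trans lt mN).
- by exists None => n n0 Pn; apply: nex; exists n.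
Qed.

Lemma card_inf_spec (T : Type) (P : T -> Prop) : is_card P (card_inf P).
Proof.
rewrite /card_inf; apply: epsilon_spec.
case: (classic (exists d : nat, is_card P (Some d))) => [[d h]|h]; first by exists (Some d).
by exists None => n e inj Pe surj; apply: h; exists n; exists e.
Qed.

Definition cls (Cat : category) (G : forall A : Ob Cat, hom A A -> Prop) (A C : Ob Cat)
  (x : hom A C) := fun y : hom A C => exists a, G A a /\ y = Defs.comp x a.
Definition rep (Cat : category) (G : forall A : Ob Cat, hom A A -> Prop) (A C : Ob Cat)
  (x : hom A C) : hom A C := epsilon (inhabits x) (cls G x).

Lemma rep_spec (Cat : category) (G : forall A : Ob Cat, hom A A -> Prop)
  (HG : subgroup_family G) (A C : Ob Cat) (x : hom A C) :
  exists a, G A a /\ rep G x = Defs.comp x a.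
Proof.
rewrite /rep; apply: (epsilon_spec (inhabits x) (cls G x)).
exists x, (idm A); split; first exact: (HG A).2.1.
by rewrite comp_id_r.
Qed.

Lemma rep_comp (Cat : category) (G : forall A : Ob Cat, hom A A -> Prop)
  (HG : subgroup_family G) (A C : Ob Cat) (x : hom A C) (b : hom A A) :
  G A b -> rep G (Defs.comp x b) = rep G x.
Proof.
move=> Gb; rewrite /rep.
have ->: cls G (Defs.comp x b) = cls G x.
  apply: functional_extensionality => y; apply: propositional_extensionality; split.
  - case=> a [Ga ->]; exists (Defs.comp b a); split; first exact: (HG A).2.2.1.
    by rewrite comp_assoc.
  - case=> a [Ga ->].
    have [bi [Gbi [h1 h2]]] := (HG A).2.2.2 b Gb.
    exists (Defs.comp bi a); split; first exact: (HG A).2.2.1.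
    by rewrite comp_assoc -(comp_assoc x b bi) h2 comp_id_r.
by rewrite (proof_irrelevance _ (inhabits (Defs.comp x b)) (inhabits x)).
Qed.

Definition idx (Cat : category) (G : forall A : Ob Cat, hom A A -> Prop) (A : Ob Cat)
  (n : nat) (e : 'I_n.+1 -> hom A A) (C : Ob Cat) (x : hom A C) : 'I_n.+1 :=
  epsilon (inhabits ord0) (fun i => x = Defs.comp (rep G x) (e i)).

Lemma idx_spec (Cat : category) (G : forall A : Ob Cat, hom A A -> Prop)
  (Hmono : all_mono Cat) (HG : subgroup_family G) (A : Ob Cat)
  (n : nat) (e : 'I_n.+1 -> hom A A) (ie : injective e) (Ge : forall i, G A (e i))
  (C : Ob Cat) (x : hom A C) (i : 'I_n.+1) :
  idx G e (Defs.comp (rep G x) (e i)) = i.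
Proof.
set y := Defs.comp (rep G x) (e i).
have ry : rep G y = rep G x.
  have [a [Ga ra]] := rep_spec HG x.
  rewrite /y ra -comp_assoc rep_comp //; exact: (HG A).2.2.1.
have hy : exists j, y = Defs.comp (rep G y) (e j) by exists i; rewrite ry.
have := epsilon_spec (inhabits ord0) (fun j => y = Defs.comp (rep G y) (e j)) hy.
rewrite -/(idx G e y) ry /y => /Hmono /ie.
by move=> <-.
Qed.

Lemma arrowT (Cat : category) (G : forall A : Ob Cat, hom A A -> Prop) (C B A : Ob Cat)
  (T : finType) (t : nat) : G_arrow G C B A #|T| t ->
  forall chi : hom A C -> T, (forall f a, G A a -> chi (Defs.comp f a) = chi f) ->
  exists (w : hom B C) (S : {set T}), #|S| <= t /\ forall f, chi (Defs.comp w f) \in S.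
Proof.
move=> H chi Hc.
have [|w [S [cS HS]]] := H (fun f => enum_rank (chi f)).
  by move=> f a Ga /=; rewrite Hc.
exists w, (enum_val @: S); split; first exact: leq_trans (leq_imset_card _ _) cS.
move=> f; rewrite -(enum_rankK (chi (Defs.comp w f))); apply: imset_f; exact: HS.
Qed.

Lemma count_lemma (Cat : category) (G : forall A : Ob Cat, hom A A -> Prop)
  (Hmono : all_mono Cat) (HG : subgroup_family G) (A : Ob Cat)
  (n : nat) (e : 'I_n.+1 -> hom A A) (ie : injective e) (Ge : forall i, G A (e i))
  (C B : Ob Cat) (k m : nat)
  (H : G_arrow (@trivial_family Cat) C B A #|{: 'I_k * 'I_n.+1}| m)
  (chi : hom A C -> 'I_k) (Hchi : G_coloring G chi) :
  exists (w : hom B C) (S : {set 'I_k}), #|S| * n.+1 <= m /\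
    forall f : hom A B, chi (Defs.comp w f) \in S.
Proof.
pose chi' (x : hom A C) : 'I_k * 'I_n.+1 := (chi x, idx G e x).
have [|w [S' [cS' HS']]] := arrowT (chi := chi') H.
  by move=> f a ->; rewrite comp_id_r.
exists w, [set c | [forall i, (c, i) \in S']]; split.
  have -> : #|[set c | [forall i, (c, i) \in S']]| * n.+1 =
    #|setX [set c | [forall i, (c, i) \in S']] [set: 'I_n.+1]|
    by rewrite cardsX cardsT card_ord.
  apply: leq_trans cS'.
  apply: subset_leq_card; apply/subsetP => -[c i].
  by rewrite !inE andbT => /forallP; apply.
move=> f; rewrite inE; apply/forallP => i.
have [a [Ga ra]] := rep_spec HG (Defs.comp w f).
have := HS' (Defs.comp f (Defs.comp a (e i))).
have eq : Defs.comp w (Defs.comp f (Defs.comp a (e i))) = Defs.comp (rep G (Defs.comp w f)) (e i).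
  by rewrite ra !comp_assoc.
rewrite /chi' eq idx_spec // ra -comp_assoc Hchi; last exact: (HG A).2.2.1.
by [].
Qed.

Lemma L1 (Cat : category) (G : forall A : Ob Cat, hom A A -> Prop)
  (HG : subgroup_family G) (A : Ob Cat)
  (g : nat) (e : 'I_g -> hom A A) (surj : forall x, G A x -> exists i, e i = x)
  (n : nat) : G_ramsey_prop G A n -> G_ramsey_prop (@trivial_family Cat) A (g * n).
Proof.
move=> PG k B.
have [C HC] := PG #|{: {ffun 'I_g -> 'I_k}}| B.
exists C => chi _.
pose chi' (x : hom A C) : {ffun 'I_g -> 'I_k} := [ffun i => chi (Defs.comp (rep G x) (e i))].
have [|w [S' [cS' HS']]] := arrowT (chi := chi') HC.
  by move=> f a Ga; apply/ffunP => i; rewrite !ffunE rep_comp.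
exists w, ((fun p : {ffun 'I_g -> 'I_k} * 'I_g => p.1 p.2) @: setX S' [set: 'I_g]).
split.
  apply: leq_trans (leq_imset_card _ _) _.
  by rewrite cardsX cardsT card_ord mulnC leq_mul2l cS' orbT.
move=> f.
have [a [Ga ra]] := rep_spec HG (Defs.comp w f).
have [bi [Gbi [h1 h2]]] := (HG A).2.2.2 a Ga.
have [i ei] := surj bi Gbi.
have eq : Defs.comp w f = Defs.comp (rep G (Defs.comp w f)) (e i).
  by rewrite ra ei -comp_assoc h2 comp_id_r.
apply/imsetP; exists (chi' (Defs.comp w f), i); first by rewrite inE HS' in_setT.
by rewrite /= ffunE -eq.
Qed.

Lemma inf_enum (T : Type) (P : T -> Prop) (x0 : T) : is_card P None ->
  forall n, exists e : 'I_n -> T, injective e /\ forall i, P (e i).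
Proof.
move=> H; elim=> [|n [e [ie Pe]]].
  exists (fun _ => x0); split; first by move=> [i hi]; exfalso; move: hi; rewrite ltn0.
  by move=> [i hi]; exfalso; move: hi; rewrite ltn0.
have ns := H n e ie Pe.
have [x [Px hx]] : exists x, P x /\ forall i, e i <> x.
  apply: NNPP => hn; apply: ns => x Px; apply: NNPP => hn2; apply: hn.
  exists x; split=> // i ei; apply: hn2; by exists i.
pose e' (i : 'I_n.+1) := if unlift ord_max i is Some j then e j else x.
exists e'; split.
  move=> i1 i2; rewrite /e'.
  case: (unliftP ord_max i1) => [j1 h1|h1]; case: (unliftP ord_max i2) => [j2 h2|h2]; subst => //.
  - by move/ie->.
  - by move=> h; case: (hx j1).
  - by move=> h; case: (hx j2).
move=> i; rewrite /e'; case: (unliftP ord_max i) => [j _|_] //.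
Qed.

Theorem proposition3p3 (Cat : category) (G : forall A : Ob Cat, hom A A -> Prop)
  (Hmono : all_mono Cat) (HG : subgroup_family G) (A : Ob Cat) :
  ramsey_degree A = mulinf (card_inf (G A)) (G_ramsey_degree G A).
Proof.
have hc := card_inf_spec (G A).
have hT := least_pos_spec (G_ramsey_prop (@trivial_family Cat) A).
have hG := least_pos_spec (G_ramsey_prop G A).
rewrite /ramsey_degree /G_ramsey_degree.
move: hc hT hG.
move: (card_inf (G A)) => dc.
move: (least_pos (G_ramsey_prop (@trivial_family Cat) A)) => dT.
move: (least_pos (G_ramsey_prop G A)) => dG.
case: dc => [g|] /=.
- move=> [e [ie [Ge surj]]].
  have [i0 _] := surj _ (HG A).2.1.
  case: g e ie Ge surj i0 => [|g] e ie Ge surj i0; first by case: i0.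
  have L2 : forall m, G_ramsey_prop (@trivial_family Cat) A m ->
      G_ramsey_prop G A (m %/ g.+1) /\ g.+1 <= m.
    move=> m PT; split.
      move=> k B; have [C HC] := PT #|{: 'I_k * 'I_g.+1}| B.
      exists C => chi Hchi.
      have [w [S [cS HS]]] := count_lemma Hmono HG ie Ge HC Hchi.
      by exists w, S; split=> //; rewrite leq_divRL.
    have [C HC] := PT #|{: 'I_1 * 'I_g.+1}| A.
    have [|w [S [cS HS]]] := count_lemma Hmono HG ie Ge HC (chi := fun _ => ord0).
      by [].
    have : 0 < #|S| by apply/card_gt0P; exists ord0; have := HS (idm A).
    move=> S0; apply: leq_trans cS; by rewrite leq_pmull.
  have L1' := L1 HG surj.
  case: dT => [nT|] /=; case: dG => [nG|] /=.
  + move=> [nT0 [PT mT]] [nG0 [PG mG]].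
    have [PG' le] := L2 _ PT.
    have h1 : nT <= g.+1 * nG by apply: mT (L1' _ PG); rewrite muln_gt0 nG0.
    have h2 : nG <= nT %/ g.+1 by apply: mG => //; rewrite divn_gt0.
    congr Some; apply/eqP; rewrite eqn_leq h1 /=.
    by rewrite mulnC -(leq_divRL _ _ (ltn0Sn g)).
  + move=> [nT0 [PT mT]] hG; have [PG' le] := L2 _ PT.
    by exfalso; apply: (hG (nT %/ g.+1)) => //; rewrite divn_gt0.
  + move=> hT [nG0 [PG mG]].
    by exfalso; apply: (hT (g.+1 * nG)); [rewrite muln_gt0 nG0 | exact: L1' _ PG].
  + by [].
- move=> hinf; case: dT => [nT|] //= [nT0 [PT _]] _.
  have [e [ie Ge]] := inf_enum (idm A) hinf nT.+1.
  have [C HC] := PT #|{: 'I_1 * 'I_nT.+1}| A.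
  have [|w [S [cS HS]]] := count_lemma Hmono HG ie Ge HC (chi := fun _ => ord0).
    by [].
  have : 0 < #|S| by apply/card_gt0P; exists ord0; have := HS (idm A).
  move=> S0; have := leq_trans (leq_pmull _ S0) cS; by rewrite ltnn.
Qed.
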